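(* Let $m,n\ge 1$, $k=\min(m,n)$, and let $M^\star\in\mathbb{R}^{m\times n}$ have singular value decomposition $M^\star=P\Sigma Q^\top$ with $P\in\mathbb{R}^{m\times k}$, $Q\in\mathbb{R}^{n\times k}$ having orthonormal columns $p_i,q_i$ and $\Sigma=\mathrm{diag}(\sigma_1,\dots,\sigma_k)$ with $\sigma_1>\sigma_2>\cdots>\sigma_k>0$. For $r\in\{1,\dots,k\}$ let $A_r=\sum_{i=1}^r\sigma_i p_iq_i^\top$. For $U\in\mathbb{R}^{m\times k}$, $V\in\mathbb{R}^{n\times k}$ define $$\mathcal{E}(U,V,r)=\min_{S_r\subseteq\{1,\dots,k\},\,|S_r|=r}\bigl\|U\Pi_{S_r}V^\top-A_r\bigr\|_F^2,$$ where $\Pi_{S}$ is the $k\times k$ diagonal matrix with $(\Pi_S)_{ii}=1$ if $i\in S$ and $0$ otherwise. Let $\mathcal{M}=\{(U,V)\in\mathbb{R}^{m\times k}\times\mathbb{R}^{n\times k}: UV^\top=M^\star\}$ be the set of global minimizers of $\mathcal{L}_{PTS}(U,V)=\|UV^\top-M^\star\|_F^2$. Then for each $r<k$, the set $\mathcal{M}_r=\{(U,V)\in\mathcal{M}:\mathcal{E}(U,V,r)=0\}$ has Lebesgue measure zero relative to $\mathcal{M}$.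
   Context: $\|\cdot\|_F$ denotes the Frobenius norm. $A_r$ is the (unique) best rank-$r$ approximation of $M^\star$ (truncated SVD). *)

(* Defs.v *)
From HB Require Import structures.
From mathcomp Require Import all_boot all_order all_algebra.
From mathcomp Require Import reals.
Set Implicit Arguments. Unset Strict Implicit. Unset Printing Implicit Defensive.
Import Order.TTheory GRing.Theory Num.Theory.
Local Open Scope ring_scope.

Definition frob2 (R : numDomainType) (m n : nat) (A : 'M[R]_(m, n)) : R :=
  \sum_(i < m) \sum_(j < n) A i j ^+ 2.

Definition PiS (R : numDomainType) (k : nat) (S : {set 'I_k}) : 'M[R]_k :=
  diag_mx (\row_i (i \in S)%:R).

(* A_r = sum_{i <= r} sigma_i p_i q_i^T  (0-based indices i < r) *)
Definition Ar (R : numDomainType) (m n k : nat) (P : 'M[R]_(m, k))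
  (sigma : 'rV[R]_k) (Q : 'M[R]_(n, k)) (r : nat) : 'M[R]_(m, n) :=
  \sum_(i < k | (i < r)%N) sigma 0 i *: (col i P *m (col i Q)^T).

(* E(U,V,r) = min over S subset of {1..k}, |S| = r, of ||U Pi_S V^T - A_r||_F^2.
   The min is written as a big Num.min seeded with the value at {0,..,r-1},
   which is one of the candidates (when r <= k). *)
Definition Eerr (R : realDomainType) (m n k : nat) (P : 'M[R]_(m, k))
  (sigma : 'rV[R]_k) (Q : 'M[R]_(n, k)) (r : nat)
  (U : 'M[R]_(m, k)) (V : 'M[R]_(n, k)) : R :=
  let F := fun S : {set 'I_k} => frob2 (U *m PiS R S *m V^T - Ar P sigma Q r) in
  \big[Num.min/F [set i : 'I_k | (i < r)%N]]_(S : {set 'I_k} | #|S| == r) F S.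

Definition Mset (R : numDomainType) (m n k : nat) (Mstar : 'M[R]_(m, n))
  (U : 'M[R]_(m, k)) (V : 'M[R]_(n, k)) : Prop := U *m V^T = Mstar.

Definition Mr (R : realDomainType) (m n k : nat) (Mstar : 'M[R]_(m, n))
  (P : 'M[R]_(m, k)) (sigma : 'rV[R]_k) (Q : 'M[R]_(n, k)) (r : nat)
  (U : 'M[R]_(m, k)) (V : 'M[R]_(n, k)) : Prop :=
  Mset Mstar U V /\ Eerr P sigma Q r U V = 0.

(* Lebesgue null sets in R^(p x q): coverable by countably many closed boxes
   of arbitrarily small total volume. *)
Definition box_vol (R : numDomainType) (p q : nat) (a b : 'M[R]_(p, q)) : R :=
  \prod_(i < p) \prod_(j < q) (b i j - a i j).

Definition lebesgue_null (R : realType) (p q : nat) (S : 'M[R]_(p, q) -> Prop)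
  : Prop :=
  forall eps : R, 0 < eps ->
  exists a b : nat -> 'M[R]_(p, q),
    (forall t i j, a t i j <= b t i j) /\
    (forall x, S x -> exists t, forall i j, a t i j <= x i j <= b t i j) /\
    (forall N, \sum_(t < N) box_vol (a t) (b t) <= eps).

(* Main.v *)
Require Import Defs.
From HB Require Import structures.
From mathcomp Require Import all_boot all_order all_algebra.
From mathcomp Require Import reals.
From mathcomp Require Import lra ring.
Import Order.TTheory GRing.Theory Num.Theory.
Local Open Scope ring_scope.
Set Warnings "-notation-overridden".

Lemma invmx_right (R : comUnitRingType) n (A B : 'M[R]_n) :
  A *m B = 1%:M -> invmx A = B.
Proof.
move=> h; have [uA _] := mulmx1_unit h.
by rewrite -[invmx A]mulmx1 -h mulmxA mulVmx // mul1mx.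
Qed.

Lemma lemA (R : fieldType) m n (P D : 'M[R]_m) (Q : 'M[R]_(n, m))
  (U : 'M[R]_m) (V : 'M[R]_(n, m)) :
  P^T *m P = 1%:M -> Q^T *m Q = 1%:M -> D \in unitmx ->
  U *m V^T = P *m D *m Q^T ->
  exists G : 'M[R]_m, G \in unitmx /\ U = P *m D *m G /\ V = Q *m (invmx G)^T.
Proof.
move=> hP hQ uD hUV.
have hPP : P *m P^T = 1%:M by apply: mulmx1C.
have [uPt uP] := mulmx1_unit hP.
have hU : U *m (V^T *m Q) = P *m D by rewrite mulmxA hUV -mulmxA hQ mulmx1.
have uPD : P *m D \in unitmx by rewrite unitmx_mul uP uD.
have hU1 : U *m (V^T *m Q *m invmx (P *m D)) = 1%:M.
  by rewrite mulmxA hU mulmxV.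
have [uU _] := mulmx1_unit hU1.
pose G := invmx D *m P^T *m U.
have uG : G \in unitmx by rewrite /G !unitmx_mul uU uPt unitmx_inv uD.
have iG : invmx G = invmx U *m P *m D.
  apply: invmx_right.
  rewrite /G -!mulmxA (mulmxA U) mulmxV // mul1mx (mulmxA P^T) hP mul1mx.
  by rewrite mulVmx.
exists G; split => //; split.
  by rewrite /G -!mulmxA (mulmxA D) mulmxV // mul1mx mulmxA hPP mul1mx.
have hVt : V^T = invmx G *m Q^T.
  have := congr1 (mulmx (invmx U)) hUV.
  by rewrite mulmxA mulVmx // mul1mx => ->; rewrite iG !mulmxA.
by rewrite -[V]trmxK hVt trmx_mul trmxK.
Qed.

Lemma geom_sum (R : realFieldType) (eps : R) N :
  \sum_(t < N) eps / 2 ^+ t.+1 = eps - eps / 2 ^+ N.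
Proof.
elim: N => [|N IH]; first by rewrite big_ord0 expr0 divr1 subrr.
rewrite big_ord_recr /= IH exprS.
have h : (0 < 2 ^+ N :> R) by apply: exprn_gt0.
field. by rewrite gt_eqF.
Qed.

Lemma le_sum_entry (R : realDomainType) p q (x : 'M[R]_(p, q)) i j :
  `|x i j| <= \sum_i \sum_j `|x i j|.
Proof.
rewrite (bigD1 i) //= (bigD1 j) //=.
have h1 : 0 <= \sum_(j0 | j0 != j) `|x i j0| by apply: sumr_ge0.
have h2 : 0 <= \sum_(i0 | i0 != i) \sum_j `|x i0 j| by
  apply: sumr_ge0 => ? _; apply: sumr_ge0.
lra.
Qed.

Lemma null_row (R : realType) p q (i0 : 'I_p) (q0 : (0 < q)%N) :
  lebesgue_null (fun x : 'M[R]_(p, q) => exists j, x i0 j = 0).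
Proof.
move=> eps eps0.
pose c (t : nat) : R := (t.+1)%:R.
pose D (t : nat) : R := c t *+ 2.
pose N := (p * q)%N.
pose dl (t : nat) : R := eps / (2 ^+ t.+2 * D t ^+ N).
pose jt (t : nat) : 'I_q := Ordinal (ltn_pmod t q0).
have c0 t : 1 <= c t by rewrite /c ler1n.
have D1 t : 1 <= D t by rewrite /D; have := c0 t; lra.
have dl0 t : 0 <= dl t.
  rewrite /dl; apply: divr_ge0; first lra.
  apply: mulr_ge0; apply: exprn_ge0; first lra. have := D1 t; lra.
exists (fun t => \matrix_(i, j) if (i == i0) && (j == jt t) then - dl t else - c t).
exists (fun t => \matrix_(i, j) if (i == i0) && (j == jt t) then dl t else c t).
split; [|split].
- move=> t i j; rewrite !mxE; case: ifP => _; [have := dl0 t| have := c0 t]; lra.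
- move=> x [j xj].
  pose B := \sum_i \sum_j `|x i j|.
  have B0 : 0 <= B by apply: sumr_ge0 => ? _; apply: sumr_ge0.
  pose L := Num.bound B.
  exists (j + q * L)%N => i j'.
  have -> : jt (j + q * L)%N = j.
    apply: val_inj => /=. by rewrite addnC mulnC modnMDl modn_small.
  rewrite !mxE; case: ifP.
    case/andP => /eqP -> /eqP ->; rewrite xj; have := dl0 (j + q * L)%N; lra.
  move=> _.
  have h1 := @le_sum_entry _ _ _ x i j'.
  have h2 : B < L%:R by apply: archi_boundP.
  have h3 : (L%:R : R) <= c (j + q * L)%N.
    rewrite /c ler_nat. apply: leq_trans (leqnSn _). 
    rewrite addnC; apply: leq_trans (leq_addr _ _). by rewrite leq_pmull.
  have := ler_norml (x i j') (c (j + q * L)%N).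
  have -> : `|x i j'| <= c (j + q * L)%N by apply: le_trans h1 (le_trans (ltW h2) h3).
  by move=> /esym /andP [-> ->].
- move=> M.
  apply: (@le_trans _ _ (\sum_(t < M) eps / 2 ^+ t.+1)); last first.
    rewrite geom_sum. have : 0 <= eps / 2 ^+ M by apply: divr_ge0; [lra| apply: exprn_ge0].
    lra.
  apply: ler_sum => t _.
  rewrite /box_vol pair_big /=.
  rewrite (bigD1 (i0, jt t)) //=.
  rewrite !mxE !eqxx /=.
  rewrite (eq_bigr (fun _ => D t)); last first.
    move=> [i j] /= hne; rewrite !mxE.
    case: ifP; last by move=> _; rewrite /D; lra.
    by case/andP => /eqP hi /eqP hj; move: hne; rewrite hi hj eqxx.
  rewrite prodr_const.
  have hc : (#|[pred i : 'I_p * 'I_q | true && (i != (i0, jt t))]| <= N)%N.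
    apply: leq_trans (max_card _) _. by rewrite card_prod !card_ord.
  have := ler_weXn2l (D1 t) hc.
  have Dp : 0 < D t ^+ N by apply: exprn_gt0; have := D1 t; lra.
  have e2 : 2 ^+ t.+2 = 2 * 2 ^+ t.+1 :> R by rewrite exprS.
  have z0 : 0 < 2 ^+ t.+1 :> R by apply: exprn_gt0.
  have dd : (dl t - - dl t) * D t ^+ N = eps / 2 ^+ t.+1.
    rewrite /dl e2. field. by rewrite !gt_eqF.
  move=> hle.
  rewrite -dd. apply: ler_wpM2l; last exact: hle.
  have := dl0 t; lra.
Qed.

Lemma Ar_eq (R : realDomainType) m n k (P : 'M[R]_(m, k)) (sigma : 'rV[R]_k)
  (Q : 'M[R]_(n, k)) r :
  Ar P sigma Q r = P *m diag_mx (\row_i (sigma 0 i * (i < r)%N%:R)) *m Q^T.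
Proof.
apply/matrixP => a b.
rewrite /Ar summxE mul_mx_diag !mxE big_mkcond /=.
apply: eq_bigr => c _; rewrite !mxE big_ord1 !mxE.
by case: ifP => _; rewrite ?mulr1 ?mulr0 ?mul0r //; ring.
Qed.

Lemma frob2_eq0 (R : realDomainType) m n (A : 'M[R]_(m, n)) :
  frob2 A = 0 -> A = 0.
Proof.
move=> h; apply/matrixP => i j; rewrite mxE.
have h1 := psumr_eq0P (fun i _ => sumr_ge0 _ (fun j _ => sqr_ge0 (A i j))) h.
have h2 := h1 i isT.
have h3 : A i j ^+ 2 = 0 by apply: (psumr_eq0P _ h2) => // ? _; exact: sqr_ge0.
by move/eqP: h3; rewrite sqrf_eq0 => /eqP.
Qed.

Lemma Eerr0 (R : realDomainType) m n k (P : 'M[R]_(m, k)) (sigma : 'rV[R]_k)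
  (Q : 'M[R]_(n, k)) r (U : 'M[R]_(m, k)) (V : 'M[R]_(n, k)) :
  (r < k)%N -> Eerr P sigma Q r U V = 0 ->
  exists S : {set 'I_k}, (exists j, j \notin S) /\
     U *m PiS R S *m V^T = Ar P sigma Q r.
Proof.
move=> rk; rewrite /Eerr.
pose F := fun S : {set 'I_k} => frob2 (U *m PiS R S *m V^T - Ar P sigma Q r).
change (\big[Num.min/F [set i : 'I_k | (i < r)%N]]_(S : {set 'I_k} | #|S| == r) F S = 0 -> exists S : {set 'I_k}, (exists j, j \notin S) /\
     U *m PiS R S *m V^T = Ar P sigma Q r).
pose K (v : R) := exists S : {set 'I_k}, (exists j, j \notin S) /\ F S = v.
have : K (\big[Num.min/F [set i : 'I_k | (i < r)%N]]_(S : {set 'I_k} | #|S| == r) F S).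
  apply: big_ind.
  - exists [set i : 'I_k | (i < r)%N]; split => //.
    exists (Ordinal rk); by rewrite inE ltnn.
  - move=> x y Kx Ky; rewrite /Num.min; by case: ifP.
  - move=> S /eqP hS; exists S; split => //.
    case: (pickP (fun j => j \notin S)) => [j hj | h]; first by exists j.
    have sub : [set: 'I_k] \subset S.
      apply/subsetP => j _; have := h j; by move/negbFE.
    have := subset_leq_card sub; rewrite cardsT card_ord hS.
    by rewrite leqNgt rk.
move=> [S [hj hF]] h0.
exists S; split => //.
apply/eqP; rewrite -subr_eq0; apply/eqP; apply: frob2_eq0.
by rewrite -h0 -hF.
Qed.

Lemma cancelPQ (R : comRingType) m n k (P : 'M[R]_(m, k)) (Q : 'M[R]_(n, k)) (Y1 Y2 : 'M[R]_k) :
  P^T *m P = 1%:M -> Q^T *m Q = 1%:M -> P *m Y1 *m Q^T = P *m Y2 *m Q^T -> Y1 = Y2.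
Proof.
move=> hP hQ h.
have key X : P^T *m (P *m X *m Q^T) *m Q = X.
  by rewrite mulmxA (mulmxA P^T P) hP mul1mx -mulmxA hQ mulmx1.
by rewrite -(key Y1) h key.
Qed.

Lemma part2 (R : realType) m n k (Mstar : 'M[R]_(m, n)) (P : 'M[R]_(m, k)) (Q : 'M[R]_(n, k))
  (sigma : 'rV[R]_k)
  (hP : P^T *m P = 1%:M) (hQ : Q^T *m Q = 1%:M)
  (hpos : forall i : 'I_k, 0 < sigma 0 i) r (hr : (r < k)%N) (i0 : 'I_k) (hi0 : (i0 < r)%N)
  (G : 'M[R]_k) :
  G \in unitmx -> Mr Mstar P sigma Q r (P *m diag_mx sigma *m G) (Q *m (invmx G)^T) ->
  exists j, G i0 j = 0.
Proof.
move=> uG [_ hE].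
have [S [[j hj] hS]] := @Eerr0 _ _ _ _ P sigma Q r _ _ hr hE.
exists j.
move: hS; rewrite Ar_eq trmx_mul trmxK => hS.
have e1 : P *m (diag_mx sigma *m G *m PiS R S *m invmx G) *m Q^T =
   P *m diag_mx (\row_i (sigma 0 i * (i < r)%N%:R)) *m Q^T.
  by rewrite -hS !mulmxA.
have e2 := @cancelPQ _ _ _ _ P Q _ _ hP hQ e1.
have e3 := congr1 (fun X => (X *m G) i0 j) e2.
move: e3; rewrite /= mulmxKV // /PiS mul_mx_diag mul_diag_mx !mxE (negbTE hj) mulr0.
rewrite hi0 mulr1 => /esym /eqP; rewrite mulf_eq0 => /orP [|/eqP //].
by rewrite gt_eqF.
Qed.

Lemma null_mono (R : realType) p q (A B : 'M[R]_(p, q) -> Prop) :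
  (forall x, A x -> B x) -> lebesgue_null B -> lebesgue_null A.
Proof.
move=> hAB hB eps e0; have [a [b [h1 [h2 h3]]]] := hB eps e0.
exists a, b; split => //; split => // x /hAB; exact: h2.
Qed.

Theorem theorem4p1 (R : realType) (m n k : nat)
  (hm : (1 <= m)%N) (hn : (1 <= n)%N) (hk : k = minn m n)
  (Mstar : 'M[R]_(m, n)) (P : 'M[R]_(m, k)) (Q : 'M[R]_(n, k))
  (sigma : 'rV[R]_k)
  (hP : P^T *m P = 1%:M) (hQ : Q^T *m Q = 1%:M)
  (hdec : forall i j : 'I_k, (i < j)%N -> sigma 0 j < sigma 0 i)
  (hpos : forall i : 'I_k, 0 < sigma 0 i)
  (hsvd : Mstar = P *m diag_mx sigma *m Q^T)
  (r : nat) (hr1 : (1 <= r)%N) (hr : (r < k)%N) :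
  (* the map G |-> (P Sigma G, Q G^{-T}) on GL_k parametrizes M ... *)
  (forall (U : 'M[R]_(m, k)) (V : 'M[R]_(n, k)),
      Mset Mstar U V <->
      exists G : 'M[R]_k, G \in unitmx /\
        U = P *m diag_mx sigma *m G /\ V = Q *m (invmx G)^T)
  /\
  (* ... and the preimage of M_r under it is Lebesgue-null in R^(k x k) *)
  lebesgue_null (fun G : 'M[R]_k =>
     G \in unitmx /\
     Mr Mstar P sigma Q r (P *m diag_mx sigma *m G) (Q *m (invmx G)^T)).
Proof.
have uS : diag_mx sigma \in unitmx.
  rewrite unitmxE det_diag unitfE; apply/prodf_neq0 => i _; by rewrite gt_eqF.
split.
  move=> U V; split; last first.
    move=> [G [uG [-> ->]]].
    by rewrite /Mset hsvd trmx_mul trmxK mulmxA mulmxK.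
  rewrite /Mset hsvd => hUV.
  case: (leqP m n) => hmn.
    have km : k = m by rewrite hk; apply/minn_idPl.
    clear hk hdec; subst k.
    exact: lemA hP hQ uS hUV.
  have km : k = n by rewrite hk; apply/minn_idPr; apply: ltnW.
  clear hk hdec; subst k.
  have hVU : V *m U^T = Q *m diag_mx sigma *m P^T.
    by rewrite -[V]trmxK -trmx_mul hUV !trmx_mul tr_diag_mx trmxK mulmxA.
  have [H [uH [hV hU]]] := @lemA _ _ _ Q (diag_mx sigma) P V U hQ hP uS hVU.
  exists (invmx (diag_mx sigma) *m (invmx H)^T).
  have uG : invmx (diag_mx sigma) *m (invmx H)^T \in unitmx.
    by rewrite unitmx_mul unitmx_inv uS unitmx_tr unitmx_inv uH.
  have iG : invmx (invmx (diag_mx sigma) *m (invmx H)^T) = H^T *m diag_mx sigma.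
    apply: invmx_right.
    rewrite -!mulmxA (mulmxA (invmx H)^T) -trmx_mul mulmxV // trmx1 mul1mx.
    by rewrite mulVmx.
  split => //; split.
    by rewrite hU mulmxA -(mulmxA P) mulmxV // mulmx1.
  by rewrite iG trmx_mul trmxK tr_diag_mx hV mulmxA.
have k0 : (0 < k)%N by apply: leq_ltn_trans hr.
apply: (@null_mono R k k _ (fun x : 'M[R]_k => exists j, x (Ordinal k0) j = 0)).
  move=> G [uG hM].
  exact: (@part2 R m n k Mstar P Q sigma hP hQ hpos r hr (Ordinal k0) hr1 G uG hM).
exact: null_row.
Qed.
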